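(* For every $l\ge1$ and every positive integer $K$, $$\limsup_{n\to\infty} f(n)^{1/n}\le c_{l,K}\cdot 2^{\eta_{l,K}},$$ where $$c_{l,K}=\prod_{i=1}^K r_l(i)^{\frac{2}{i(i+1)}\prod_{j=1}^l(1-1/p_j)},\qquad \eta_{l,K}=2-\sum_{i=1}^K\frac{2}{i(i+1)}\prod_{j=1}^l\left(1-\frac1{p_j}\right)|M_l(i)|.$$
   Context: A set of positive integers is primitive if no element divides another. $f(n)$ is the number of $n$-element primitive subsets of $\{1,\dots,2n\}$. Let $p_1<p_2<\dots$ be the primes. $M_l$ is the set of positive integers all of whose prime factors lie in $\{p_1,\dots,p_l\}$, $M_l(x)=\{m\in M_l:m\le x\}$ ordered by divisibility, and $r_l(i)$ denotes the total number of maximum-size antichains of $M_l(i)$. *)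

(* Defs.v *)
From Stdlib Require Import Reals.
From mathcomp Require Import all_boot.

Set Implicit Arguments.
Unset Strict Implicit.
Unset Printing Implicit Defensive.

Lemma exists_prime_above (p : nat) : exists q, (p < q) && prime q.
Proof. case: (prime_above p) => q H1 H2; exists q; by rewrite H1 H2. Qed.

Definition next_prime (p : nat) : nat := ex_minn (exists_prime_above p).

(* nth_prime0 k = p_{k+1}  (0-indexed: nth_prime0 0 = 2) *)
Fixpoint nth_prime0 (k : nat) : nat :=
  match k with
  | 0 => 2
  | k'.+1 => next_prime (nth_prime0 k')
  end.

(* p_j for j >= 1 (1-indexed, as in the paper) *)
Definition p_ (j : nat) : nat := nth_prime0 j.-1.

Definition primitive_nat (A : seq nat) : bool :=
  all (fun x => all (fun y => (x %| y) ==> (x == y)) A) A.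

(* Subsets of {1,...,2n} are encoded as subsets of 'I_(2n) via i |-> i+1. *)
Definition to_nats (N : nat) (A : {set 'I_N}) : seq nat :=
  [seq (val i).+1 | i in A].

Definition f_prim (n : nat) : nat :=
  #|[set A : {set 'I_(n.*2)} | (#|A| == n) && primitive_nat (to_nats A)]|.

Definition in_M (l m : nat) : bool :=
  (0 < m) && all (fun q => q \in [seq p_ j | j <- iota 1 l]) (primes m).

(* M_l(i) encoded as a subset of 'I_(i+1) (element k represents integer k) *)
Definition Mset (l i : nat) : {set 'I_i.+1} := [set k : 'I_i.+1 | in_M l k].

Definition antichain (l i : nat) (A : {set 'I_i.+1}) : bool :=
  (A \subset Mset l i) && primitive_nat [seq val k | k in A].

Definition width (l i : nat) : nat :=
  \max_(A : {set 'I_i.+1} | antichain l A) #|A|.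

Definition r_ (l i : nat) : nat :=
  #|[set A : {set 'I_i.+1} | antichain l A && (#|A| == width l i)]|.

Definition card_M (l i : nat) : nat := #|Mset l i|.

Local Open Scope R_scope.

(* \prod_{k = a}^{b} F k  over reals (empty product = 1) *)
Definition Rprod (a b : nat) (F : nat -> R) : R :=
  foldr Rmult 1 (map F (iota a (S b - a))).

Definition Rsum (a b : nat) (F : nat -> R) : R :=
  foldr Rplus 0 (map F (iota a (S b - a))).

Definition phi_l (l : nat) : R := Rprod 1 l (fun j => 1 - / INR (p_ j)).

Definition c_ (l K : nat) : R :=
  Rprod 1 K (fun i => Rpower (INR (r_ l i)) (2 / (INR i * (INR i + 1)) * phi_l l)).

Definition eta_ (l K : nat) : R :=
  2 - Rsum 1 K (fun i => 2 / (INR i * (INR i + 1)) * phi_l l * INR (card_M l i)).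

Definition limsup_le (a : nat -> R) (L : R) : Prop :=
  forall eps : R, 0 < eps -> exists N : nat, forall n : nat, (N <= n)%nat -> a n <= L + eps.

(* Main.v *)
Require Import Defs.
From Stdlib Require Import Reals Lra.
From mathcomp Require Import all_boot.
From mathcomp Require Import zify.

Set Implicit Arguments.
Unset Strict Implicit.
Unset Printing Implicit Defensive.


Lemma next_prime_spec p : p < next_prime p /\ prime (next_prime p).
Proof.
rewrite /next_prime; case: ex_minnP => m /andP[h1 h2] _; by split.
Qed.

Lemma nth_prime0_prime k : prime (nth_prime0 k).
Proof. case: k => [|k] //=; exact: (next_prime_spec _).2. Qed.

Lemma nth_prime0_lt j k : j < k -> nth_prime0 j < nth_prime0 k.
Proof.
elim: k => [|k IH] //; rewrite ltnS leq_eqVlt => /orP[/eqP->|/IH h] /=.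
  exact: (next_prime_spec _).1.
exact: ltn_trans h (next_prime_spec _).1.
Qed.

Lemma nth_prime0_inj : injective nth_prime0.
Proof.
move=> j k e; case: (ltngtP j k) => // h; have := nth_prime0_lt h; by rewrite e ltnn.
Qed.

Definition ps (l : nat) : seq nat := [seq p_ j | j <- iota 1 l].

Lemma ps_prime l : all prime (ps l).
Proof. apply/allP => q /mapP[j _ ->]; exact: nth_prime0_prime. Qed.

Lemma ps_uniq l : uniq (ps l).
Proof.
rewrite map_inj_in_uniq ?iota_uniq // => j k; rewrite !mem_iota /p_ => /andP[j1 _] /andP[k1 _] e.
have := nth_prime0_inj e; lia.
Qed.

Lemma two_in_ps l : 0 < l -> 2 \in ps l.
Proof. move=> hl; apply/mapP; exists 1 => //; rewrite mem_iota; lia. Qed.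

Definition piL (l : nat) : nat_pred := [pred q | q \in ps l].

Lemma in_ME l k : in_M l k = (piL l).-nat k.
Proof. by []. Qed.

Definition QQ (l : nat) := \prod_(p <- ps l) p.

Lemma QQ_pnat l : (piL l).-nat (QQ l).
Proof.
rewrite /QQ; have : {subset ps l <= ps l} by [].
elim: {1 3}(ps l) => [|q s IH] sub; first by rewrite big_nil.
rewrite big_cons pnatM IH ?andbT; last by move=> x hx; apply: sub; rewrite inE hx orbT.
have hq : q \in ps l by apply: sub; rewrite inE eqxx.
have pq : prime q by move: (ps_prime l) => /allP; apply.
by rewrite pnatE //.
Qed.

Lemma QQ_gt0 l : 0 < QQ l.
Proof. by case/andP: (QQ_pnat l). Qed.

Lemma coprime_QQ l m : 0 < m -> coprime (QQ l) m = (piL l)^'.-nat m.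
Proof.
move=> m0; apply/idP/idP; last by apply: pnat_coprime; exact: QQ_pnat.
move=> co; apply/pnatP => // p pp pm; apply/negP => /= hp.
have : p %| QQ l by rewrite /QQ (big_rem _ hp) /= dvdn_mulr.
move=> pQ; have := coprime_dvdl pQ co; rewrite prime_coprime // pm //.
Qed.

Lemma totient_prod_primes (s : seq nat) : all prime s -> uniq s ->
  totient (\prod_(p <- s) p) = \prod_(p <- s) p.-1.
Proof.
elim: s => [|q s IH]; first by rewrite !big_nil.
rewrite /= => /andP[pq ps'] /andP[qs us]; rewrite !big_cons totient_coprime.
  by rewrite totient_prime // IH.
rewrite prime_coprime // Euclid_dvd_prod //; apply/negP.
elim: s qs ps' {IH us} => [|r s IH]; first by rewrite big_nil.
rewrite inE big_cons negb_or /= => /andP[qr qs] /andP[pr ps'].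
rewrite dvdn_prime2 // (negbTE qr) /=; exact: IH.
Qed.

Definition TT l := totient (QQ l).

Lemma TT_eq l : TT l = \prod_(p <- ps l) p.-1.
Proof. exact: totient_prod_primes (ps_prime l) (ps_uniq l). Qed.

Definition GG l x := \sum_(0 <= m < x) coprime (QQ l) m.

Lemma GG_S l x : GG l x.+1 = GG l x + coprime (QQ l) x.
Proof. by rewrite /GG big_nat_recr. Qed.

Lemma GG_Q l : GG l (QQ l) = TT l.
Proof. rewrite /TT /GG totient_count_coprime; done. Qed.

Lemma GG_addQ l x : GG l (x + QQ l) = GG l x + TT l.
Proof.
elim: x => [|x IH]; first by rewrite add0n GG_Q /GG big_geq.
rewrite addSn !GG_S IH /coprime gcdnDr; lia.
Qed.

Lemma GG_mono l x y : x <= y -> GG l x <= GG l y.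
Proof.
move=> h; rewrite -(subnKC h); elim: (y - x) => [|k IH]; first by rewrite addn0.
rewrite addnS GG_S; exact: leq_trans IH (leq_addr _ _).
Qed.

Lemma GG_le l x : GG l x <= x.
Proof. elim: x => [|x IH]; first by rewrite /GG big_geq. rewrite GG_S; case: coprime => /=; lia. Qed.

Lemma GG_kQ l k : GG l (k * QQ l) = k * TT l.
Proof.
elim: k => [|k IH]; first by rewrite /GG big_geq.
by rewrite mulSn addnC GG_addQ IH mulSn addnC.
Qed.

Lemma GG_lb l x : (x %/ QQ l) * TT l <= GG l x.
Proof. rewrite -GG_kQ; apply: GG_mono; exact: leq_divM. Qed.

Lemma GG_ub l x : GG l x <= (x %/ QQ l).+1 * TT l.
Proof.
rewrite -GG_kQ; apply: GG_mono; rewrite mulSn {1}(divn_eq x (QQ l)) addnC leq_add2r.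
exact: ltnW (ltn_pmod _ (QQ_gt0 l)).
Qed.

Lemma mem_valP a (C : {set 'I_a}) x :
  reflect (exists2 k, k \in C & x = (k : nat)) (x \in [seq val k | k in C]).
Proof.
apply: (iffP mapP) => [[k]|[k]]; rewrite ?mem_enum => hk ->; by exists k; rewrite ?mem_enum.
Qed.

Lemma to_natsP N (A : {set 'I_N}) x :
  reflect (exists2 i, i \in A & x = (i : nat).+1) (x \in to_nats A).
Proof.
apply: (iffP mapP) => [[k]|[k]]; rewrite ?mem_enum => hk ->; by exists k; rewrite ?mem_enum.
Qed.

Lemma to_nats_bnd N (A : {set 'I_N}) x : x \in to_nats A -> 0 < x <= N.
Proof. by case/to_natsP => i _ ->; rewrite ltn_ord. Qed.

Lemma mem_to_nats N (A : {set 'I_N}) (i : 'I_N) : ((i : nat).+1 \in to_nats A) = (i \in A).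
Proof.
apply/to_natsP/idP => [[j hj [e]]|h]; last by exists i.
by have -> : i = j by apply: val_inj.
Qed.

Lemma primP (s : seq nat) :
  reflect (forall x y, x \in s -> y \in s -> x %| y -> x = y) (primitive_nat s).
Proof.
apply: (iffP allP) => [h x y hx hy dxy|h x hx].
  by move/allP: (h x hx) => /(_ y hy); rewrite dxy => /eqP.
by apply/allP => y hy; apply/implyP => d; apply/eqP; apply: h.
Qed.

Lemma odd_part_cmp x y : 0 < x -> 0 < y -> x`_2^' = y`_2^' -> (x %| y) || (y %| x).
Proof.
move=> x0 y0 e; rewrite -(partnC 2 x0) -(partnC 2 y0) e !p_part.
have o0 := part_gt0 2^' y.
case: (leqP (logn 2 x) (logn 2 y)) => h.
  by apply/orP; left; rewrite dvdn_pmul2r //; exact: dvdn_exp2l.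
by apply/orP; right; rewrite dvdn_pmul2r //; apply: dvdn_exp2l; exact: ltnW.
Qed.

Lemma prim_oddinj (s : seq nat) : primitive_nat s -> (forall x, x \in s -> 0 < x) ->
  {in s &, injective (fun x => x`_2^')}.
Proof.
move=> /primP pr pos x y hx hy e.
case/orP: (odd_part_cmp (pos x hx) (pos y hy) e) => d; first exact: pr.
by apply/esym/pr.
Qed.

Lemma part_le pi x : 0 < x -> x`_pi <= x.
Proof. move=> h; exact: dvdn_leq h (dvdn_part _ _). Qed.

Lemma odd_part_odd x : odd x`_2^'.
Proof. by rewrite odd_2'nat part_pnat. Qed.

Lemma two_part_2' x : (x`_2)`_2^' = 1.
Proof. by apply: part_p'nat; rewrite pnatNK part_pnat. Qed.

Lemma in_M_gt0 l k : in_M l k -> 0 < k.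
Proof. by case/andP. Qed.

Lemma in_M_odd_part l k : in_M l k -> in_M l (k`_2^').
Proof. rewrite !in_ME; apply: pnat_dvd; exact: dvdn_part. Qed.

Lemma in_M_two_part l x : 0 < l -> in_M l (x`_2).
Proof.
move=> hl; rewrite in_ME; apply: sub_in_pnat (part_pnat 2 x) => p _.
by rewrite !inE => /eqP->; exact: two_in_ps.
Qed.

Lemma in_M_mul l a b : in_M l (a * b) = in_M l a && in_M l b.
Proof. by rewrite !in_ME pnatM. Qed.

Definition OddS l i : {set 'I_i.+1} := [set k : 'I_i.+1 | odd k && in_M l k].

Definition opart i (k : 'I_i.+1) : 'I_i.+1 := inord (val k)`_2^'.

Lemma opart_val l i (k : 'I_i.+1) : in_M l k -> (opart k : nat) = (k : nat)`_2^'.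
Proof.
move=> h; rewrite /opart inordK // ltnS; apply: leq_trans (part_le _ (in_M_gt0 h)) _.
by rewrite -ltnS.
Qed.

Lemma opart_inj l i (C : {set 'I_i.+1}) : antichain l C -> {in C &, injective (@opart i)}.
Proof.
case/andP => /subsetP sub pr x y hx hy e.
have mx : in_M l x by have := sub x hx; rewrite inE.
have my : in_M l y by have := sub y hy; rewrite inE.
apply: val_inj; apply: (prim_oddinj pr).
- by move=> z /mem_valP[k hk ->]; have := sub k hk; rewrite inE => /in_M_gt0.
- by apply/mem_valP; exists x.
- by apply/mem_valP; exists y.
by rewrite -(opart_val mx) -(opart_val my) e.
Qed.

Lemma opart_OddS l i (C : {set 'I_i.+1}) : antichain l C -> (@opart i) @: C \subset OddS l i.
Proof.
case/andP => /subsetP sub _; apply/subsetP => z /imsetP[k hk ->].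
have mk : in_M l k by have := sub k hk; rewrite inE.
by rewrite inE (opart_val mk) odd_part_odd in_M_odd_part.
Qed.

Lemma width_le l i : width l i <= #|OddS l i|.
Proof.
apply/bigmax_leqP => C hC.
rewrite -(card_in_imset (opart_inj hC)); exact: subset_leq_card (opart_OddS hC).
Qed.

Lemma r_le l i : r_ l i <= 2 ^ card_M l i.
Proof.
rewrite /r_ /card_M -card_powerset; apply: subset_leq_card; apply/subsetP => A.
by rewrite !inE => /andP[/andP[h _] _].
Qed.

Definition valid n (A : {set 'I_(n.*2)}) := (#|A| == n) && primitive_nat (to_nats A).

Lemma card_oddN n : #|[set j : 'I_(n.*2) | odd j.+1]| = n.
Proof.
rewrite -sum1_card big_mkcond /=.
under eq_bigr => i _ do rewrite inE.
rewrite -(big_mkord xpredT (fun j => if ~~ odd j then 1 else 0)).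
elim: n => [|n IH]; first by rewrite big_geq.
rewrite doubleS !big_nat_recr //= IH /= odd_double /=; lia.
Qed.

Lemma cover_odd n (A : {set 'I_(n.*2)}) y : valid A -> odd y -> 0 < y <= n.*2 ->
  exists2 x, x \in to_nats A & x`_2^' = y.
Proof.
case/andP => /eqP cA pr oy /andP[y0 yN].
set h := fun i : 'I_(n.*2) => (insubd i (((i : nat).+1)`_2^').-1 : 'I_(n.*2)).
have hv i : (h i : nat) = (((i : nat).+1)`_2^').-1.
  rewrite /h val_insubd ifT //; have := part_le 2^' (ltn0Sn i); have := part_gt0 2^' (i : nat).+1.
  have := ltn_ord i; lia.
have hinj : {in A &, injective h}.
  move=> i j hi hj e; apply: val_inj; apply: succn_inj.
  apply: (prim_oddinj pr); rewrite ?mem_to_nats //.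
    by move=> z /to_natsP[k _ ->].
  have := congr1 val e; rewrite /= !hv; have := part_gt0 2^' (i : nat).+1.
  have := part_gt0 2^' (j : nat).+1; lia.
set O := [set j : 'I_(n.*2) | odd j.+1].
have sub : h @: A \subset O.
  apply/subsetP => z /imsetP[i _ ->]; rewrite inE hv prednK ?part_gt0 //.
  exact: odd_part_odd.
have eqO : h @: A = O.
  have cO : #|O| = n by exact: card_oddN.
  apply/eqP; rewrite eqEcard sub /=; have -> := card_in_imset hinj; by rewrite cO cA.
have hy : y.-1 < n.*2 by lia.
have : Ordinal hy \in O by rewrite inE /=; move: oy; rewrite -(prednK y0).
rewrite -eqO => /imsetP[i hi e]; exists (i : nat).+1; first by rewrite mem_to_nats.
have := congr1 val e; rewrite /= hv; have := part_gt0 2^' (i : nat).+1; lia.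
Qed.

Definition Bf l N (A : {set 'I_N}) m i : {set 'I_i.+1} :=
  [set k : 'I_i.+1 | ((k : nat) * m \in to_nats A) && in_M l k].

Definition maxAC l i : {set {set 'I_i.+1}} :=
  [set C : {set 'I_i.+1} | antichain l C && (#|C| == width l i)].

Lemma two_dvd_QQ l : 0 < l -> 2 %| QQ l.
Proof. by move=> hl; rewrite /QQ (big_rem _ (two_in_ps hl)) /= dvdn_mulr. Qed.

Lemma Bf_max l n (A : {set 'I_(n.*2)}) m : 0 < l -> valid A -> 0 < m -> coprime (QQ l) m ->
  Bf l A m (n.*2 %/ m) \in maxAC l (n.*2 %/ m).
Proof.
move=> hl vA m0 co; set i := n.*2 %/ m; set B := Bf l A m i.
have pr := vA; case/andP: pr => _ pr.
have ac : antichain l B.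
  apply/andP; split.
    by apply/subsetP => k; rewrite !inE => /andP[_ ->].
  apply/primP => x y /mem_valP[kx]; rewrite inE => /andP[hx _] -> /mem_valP[ky].
  rewrite inE => /andP[hy _] -> d.
  have : (kx : nat) * m = ky * m by apply: (primP _ pr) => //; exact: dvdn_mul.
  by move/eqP; rewrite eqn_mul2r eqn0Ngt m0 /= => /eqP.
rewrite inE ac /=; apply/eqP/anti_leq/andP; split.
  exact: (leq_bigmax_cond (F := fun C : {set 'I_i.+1} => #|C|) B ac).
apply: leq_trans (width_le l i) _.
rewrite -(card_in_imset (opart_inj ac)); apply: subset_leq_card.
apply/subsetP => o; rewrite inE => /andP[oo mo].
have om : odd m by rewrite -coprime2n; exact: coprime_dvdl (two_dvd_QQ hl) co.
have o0 := in_M_gt0 mo.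
have ole : (o : nat) * m <= n.*2.
  by rewrite -leq_divRL //; rewrite -ltnS.
have h1 : odd ((o : nat) * m) by rewrite oddM oo om.
have h2 : 0 < (o : nat) * m <= n.*2 by rewrite muln_gt0 o0 m0 ole.
have [x hx ex] := cover_odd vA h1 h2.
have x0 : 0 < x by have := to_nats_bnd hx; lia.
have ek : (x`_2 * o) * m = x by rewrite -mulnA -ex partnC.
have kle : x`_2 * o < i.+1 by rewrite ltnS leq_divRL // ek; have := to_nats_bnd hx; lia.
have mk : in_M l (x`_2 * o) by rewrite in_M_mul in_M_two_part.
apply/imsetP; exists (Ordinal kle).
  by rewrite inE /= ek hx mk.
apply: val_inj; rewrite /= (opart_val (l := l)) //= partnM ?part_gt0 // two_part_2' mul1n.
by rewrite part_pnat_id // -odd_2'nat.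
Qed.

Definition wid N m (B : {set 'I_(N %/ m).+1}) : {set 'I_N.+1} :=
  [set @widen_ord (N %/ m).+1 N.+1 (leq_div N m) k | k in B].

Definition fibrs l N (A : {set 'I_N}) m : {set 'I_N.+1} :=
  [set k : 'I_N.+1 | ((k : nat) * m \in to_nats A) && in_M l k].

Lemma fibrs_wid l N (A : {set 'I_N}) m : 0 < m -> fibrs l A m = wid (Bf l A m (N %/ m)).
Proof.
move=> m0; apply/setP => k; rewrite inE; apply/idP/imsetP.
  case/andP=> hk mk.
  have kle : (k : nat) < (N %/ m).+1.
    by rewrite ltnS leq_divRL //; have := to_nats_bnd hk; lia.
  exists (Ordinal kle); first by rewrite inE /= hk mk.
  exact: val_inj.
by case=> j; rewrite inE => hj ->.
Qed.

Definition DD l N (m : 'I_N.+1) := (0 < m) && coprime (QQ l) m.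

Lemma f_bound n l : 0 < l ->
  f_prim n <= \prod_(m < (n.*2).+1 | DD l m) r_ l (n.*2 %/ m).
Proof.
move=> hl; set N := n.*2.
have -> : f_prim n = #|[set A : {set 'I_N} | valid A]| by [].
set V := [set A : {set 'I_N} | valid A].
pose Phi (A : {set 'I_N}) : {ffun 'I_N.+1 -> {set 'I_N.+1}} :=
  [ffun m => if DD l m then fibrs l A m else set0].
pose F (m : 'I_N.+1) : pred {set 'I_N.+1} :=
  [pred B | if DD l m then B \in (@wid N m) @: maxAC l (N %/ m) else B == set0].
have inj : {in V &, injective Phi}.
  move=> A A'; rewrite !inE => vA vA' e; apply/setP => j.
  set x := (j : nat).+1.
  have x0 : 0 < x by [].
  set mm := x`_(piL l)^'.
  have mle : mm < N.+1 by rewrite ltnS; apply: leq_trans (part_le _ x0) _; exact: ltn_ord.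
  have Dm : DD l (Ordinal mle).
    by rewrite /DD /= part_gt0 coprime_QQ ?part_gt0 // part_pnat.
  move/ffunP: e => /(_ (Ordinal mle)); rewrite /Phi !ffunE Dm => ef.
  set s := x`_(piL l).
  have sle : s < N.+1 by rewrite ltnS; apply: leq_trans (part_le _ x0) _; exact: ltn_ord.
  have ms : in_M l s by rewrite in_ME part_pnat.
  have esm : s * mm = x by rewrite partnC.
  rewrite -!mem_to_nats -/x -esm.
  move/setP: ef => /(_ (Ordinal sle)); rewrite !inE /= ms !andbT.
  by [].
have sub : Phi @: V \subset family F.
  apply/subsetP => f /imsetP[A]; rewrite inE => vA ->; apply/familyP => m.
  rewrite /F /Phi ffunE inE; case Dm: (DD l m) => //.
  case/andP: Dm => m0 co.
  rewrite fibrs_wid //; apply: imset_f; exact: Bf_max.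
rewrite -(card_in_imset inj); apply: leq_trans (subset_leq_card sub) _.
rewrite card_family foldrE big_map big_enum /= [X in _ <= X]big_mkcond /=.
apply: leq_prod => m _.
rewrite /F; case: (DD l m).
  apply: leq_trans (leq_imset_card _ _) _; exact: leqnn.
have -> : #|[pred B : {set 'I_N.+1} | B == set0]| = #|pred1 (set0 : {set 'I_N.+1})| by apply: eq_card.
by rewrite card1.
Qed.

Lemma card_set_sum (T : finType) (p : pred T) : #|[set x | p x]| = \sum_x (p x : nat).
Proof. rewrite -sum1_card big_mkcond; apply: eq_bigr => x _; rewrite inE; by case: (p x). Qed.

Lemma sum_eq1 N v : v < N.+1 -> \sum_(m < N.+1) ((v == m) : nat) = 1.
Proof.
move=> hv; rewrite (bigD1 (Ordinal hv)) //= eqxx big1 // => i ne.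
case: eqP => // e; move: ne; have -> : i = Ordinal hv by apply: val_inj. by rewrite eqxx.
Qed.

Lemma cardM_le l N m : 0 < m -> coprime (QQ l) m ->
  card_M l (N %/ m) <= #|[set x : 'I_N | (((x : nat).+1)`_(piL l)^' == m)]|.
Proof.
move=> m0 co; case: (leqP m N) => mN; last first.
  by rewrite /card_M divn_small // (eq_card (B := pred0)) ?card0 // => k; rewrite !inE /= ord1.
have h0 : m.-1 < N by lia.
set g := fun k : 'I_(N %/ m).+1 => (insubd (Ordinal h0) ((k : nat) * m).-1 : 'I_N).
have gv (k : 'I_(N %/ m).+1) : in_M l k -> (g k : nat) = ((k : nat) * m).-1.
  move=> mk; rewrite /g val_insubd ifT //; have := ltn_ord k; rewrite ltnS leq_divRL // => h.
  have := in_M_gt0 mk; lia.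
have ginj : {in Mset l (N %/ m) &, injective g}.
  move=> a b; rewrite !inE => ma mb e; apply: val_inj; have := congr1 val e.
  rewrite /= !gv //; have := in_M_gt0 ma; have := in_M_gt0 mb => a0 b0 e'.
  have : (a : nat) * m = b * m by have := muln_gt0 a m; have := muln_gt0 b m; rewrite a0 b0 m0 /=; lia.
  by move/eqP; rewrite eqn_mul2r eqn0Ngt m0 /= => /eqP.
rewrite /card_M -(card_in_imset ginj); apply: subset_leq_card; apply/subsetP => x.
case/imsetP => k mk0 ->; have mk : in_M l k by move: mk0; rewrite /Mset inE.
rewrite inE (gv _ mk).
have km : 0 < (k:nat) * m by rewrite muln_gt0 (in_M_gt0 mk) m0.
rewrite prednK // partnM ?(in_M_gt0 mk) // part_p'nat; last by rewrite pnatNK -in_ME.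
rewrite mul1n part_pnat_id //; by rewrite -coprime_QQ.
Qed.

Lemma sum_cardM l N :
  \sum_(m < N.+1 | DD l m) card_M l (N %/ m) <= N.
Proof.
apply: (@leq_trans (\sum_(m < N.+1) #|[set x : 'I_N | (((x : nat).+1)`_(piL l)^' == m)]|)).
  rewrite [X in _ <= X](bigID (@DD l N)) /=; apply: leq_trans (leq_addr _ _).
  apply: leq_sum => m /andP[m0 co]; exact: cardM_le.
under eq_bigr => m _ do rewrite card_set_sum.
rewrite exchange_big /= -[X in _ <= X](card_ord N) -sum1_card; apply: leq_sum => x _.
rewrite sum_eq1 // ltnS; apply: leq_trans (part_le _ (ltn0Sn _)) _; exact: ltn_ord.
Qed.

Definition CC l N j := #|[set m : 'I_N.+1 | DD l m && (N %/ m == j)]|.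

Lemma part_gen (R : Type) (idx : R) (op : Monoid.com_law idx) l N K (F : nat -> R) :
  \big[op/idx]_(m < N.+1 | DD l m && (N %/ m <= K)) F (N %/ m) =
  \big[op/idx]_(j < K.+1 | 0 < j) \big[op/idx]_(m < N.+1 | DD l m && (N %/ m == j)) F j.
Proof.
rewrite (partition_big (fun m : 'I_N.+1 => (inord (N %/ m) : 'I_K.+1)) (fun j : 'I_K.+1 => 0 < j)).
  apply: eq_bigr => j j0; apply: eq_big => m.
    case Dm: (DD l m) => //=; case: leqP => hm.
      by rewrite -(inj_eq val_inj) /= inordK.
    by apply/esym/negbTE; apply: contraTneq hm => ->; rewrite -ltnNge ltnS; have := ltn_ord j; rewrite ltnS.
  by case/andP=> /andP[_ hm] /eqP <-; rewrite inordK.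
move=> m /andP[/andP[m0 _] hm]; rewrite inordK // divn_gt0 // -ltnS; exact: ltn_ord.
Qed.

Lemma nat_main n l K : 0 < l ->
  f_prim n * 2 ^ (\sum_(j < K.+1 | 0 < j) CC l (n.*2) j * card_M l j)
  <= (\prod_(j < K.+1 | 0 < j) r_ l j ^ CC l (n.*2) j) * 2 ^ n.*2.
Proof.
move=> hl; set N := n.*2.
have e1 : \sum_(j < K.+1 | 0 < j) CC l N j * card_M l j =
          \sum_(m < N.+1 | DD l m && (N %/ m <= K)) card_M l (N %/ m).
  rewrite part_gen; apply: eq_bigr => j _; rewrite sum_nat_const /CC.
  by apply: congr2 => //; apply: eq_card => m; rewrite inE.
have e2 : \prod_(j < K.+1 | 0 < j) r_ l j ^ CC l N j =
          \prod_(m < N.+1 | DD l m && (N %/ m <= K)) r_ l (N %/ m).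
  rewrite part_gen; apply: eq_bigr => j _; rewrite prod_nat_const /CC.
  by apply: congr2 => //; apply: eq_card => m; rewrite inE.
rewrite e1 e2.
apply: leq_trans (leq_mul (f_bound n hl) (leqnn _)) _.
rewrite (bigID (fun m : 'I_N.+1 => N %/ m <= K)) /= -mulnA leq_mul2l; apply/orP; right.
apply: (@leq_trans (2 ^ (\sum_(m < N.+1 | DD l m && ~~ (N %/ m <= K)) card_M l (N %/ m)) *
   2 ^ \sum_(m < N.+1 | DD l m && (N %/ m <= K)) card_M l (N %/ m))).
  rewrite leq_mul2r; apply/orP; right; rewrite expn_sum; apply: leq_prod => m _; exact: r_le.
rewrite -expnD leq_pexp2l // addnC -bigID /=; exact: sum_cardM.
Qed.

Lemma CC_nat l N j : 0 < j ->
  GG l (N %/ j).+1 <= CC l N j + GG l (N %/ j.+1).+1.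
Proof.
move=> j0; set a := N %/ j.+1; set b := N %/ j.
have ab : a <= b by apply: leq_div2l.
have bN : b <= N by apply: leq_div.
have e : CC l N j = \sum_(0 <= m < N.+1) ((0 < m) && coprime (QQ l) m && (N %/ m == j) : nat).
  by rewrite /CC card_set_sum big_mkord.
have mid : \sum_(a.+1 <= m < b.+1) (coprime (QQ l) m : nat) <= CC l N j.
  have aN : a.+1 <= N.+1 by rewrite ltnS; apply: leq_trans ab bN.
  have bN1 : b.+1 <= N.+1 by rewrite ltnS.
  rewrite e (big_cat_nat _ (n := a.+1) (m := 0) (p := N.+1)) //.
  rewrite (big_cat_nat _ (n := b.+1) (m := a.+1) (p := N.+1)) //.
  rewrite [in X in _ <= X]/=.
  have em : \sum_(a.+1 <= i < b.+1) ((0 < i) && coprime (QQ l) i && (N %/ i == j) : nat)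
         = \sum_(a.+1 <= m < b.+1) (coprime (QQ l) m : nat).
    apply: eq_big_nat => m /andP[am mb].
    have m0 : 0 < m by apply: leq_trans am.
    have h1 : j <= N %/ m.
      by rewrite leq_divRL // mulnC -leq_divRL //; rewrite ltnS in mb.
    have h2 : N %/ m <= j.
      rewrite -ltnS ltn_divLR // ltnNge mulnC -leq_divRL //; by rewrite -ltnNge.
    have -> : N %/ m == j by rewrite eqn_leq h1 h2.
    by rewrite m0 andbT.
  by rewrite em addnCA leq_addr.
have ab1 : a.+1 <= b.+1 by rewrite ltnS.
rewrite /GG (big_cat_nat _ (n := a.+1) (m := 0) (p := b.+1)) //.
rewrite [in X in X <= _]/= addnC leq_add2r; exact: mid.
Qed.

Lemma f_pos n : 0 < f_prim n.
Proof.
rewrite /f_prim card_gt0; apply/set0Pn.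
exists [set i : 'I_(n.*2) | n <= i]; rewrite inE; apply/andP; split.
  rewrite card_set_sum -(big_mkord xpredT (fun i => (n <= i : nat))).
  rewrite (big_cat_nat _ (n := n)) //=; last by rewrite -addnn leq_addr.
  rewrite big_nat_cond big1; last by move=> i /andP[/andP[_ h] _]; rewrite leqNgt h.
  rewrite add0n big_nat_cond (eq_bigr (fun _ => 1)); last by move=> i /andP[/andP[h _] _]; rewrite h.
  by rewrite -big_nat_cond sum_nat_const_nat muln1 -addnn addnK.
apply/primP => x y /to_natsP[i]; rewrite inE => hi -> /to_natsP[j]; rewrite inE => hj ->.
case/dvdnP => k ek; have ii := ltn_ord i; have jj := ltn_ord j.
move: (i : nat) (j : nat) hi hj ii jj ek => a b ha hb ia jb ek.
have N2 : n.*2 = n + n by rewrite addnn.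
rewrite N2 in ia jb.
case: k ek => [|[|k]] ek; [by rewrite mul0n in ek | by rewrite mul1n in ek | exfalso; nia].
Qed.

Lemma ord_to_iota (R : Type) (idx : R) (op : Monoid.law idx) K (F : nat -> R) :
  \big[op/idx]_(j < K.+1 | (0 < j)%N) F j = \big[op/idx]_(j <- iota 1 K) F j.
Proof.
rewrite -(big_mkord (fun j => (0 < j)%N)) /index_iota subn0 /= big_cons /=.
rewrite -(big_filter (iota 1 K)); congr bigop; apply/all_filterP/allP => x.
by rewrite mem_iota => /andP[h _].
Qed.

Local Open Scope R_scope.

Lemma INR_mul a b : INR (a * b)%N = INR a * INR b.
Proof. by rewrite -multE mult_INR. Qed.
Lemma INR_add a b : INR (a + b)%N = INR a + INR b.
Proof. by rewrite -plusE plus_INR. Qed.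
Lemma INR_exp a b : INR (a ^ b)%N = INR a ^ b.
Proof. elim: b => [|b IH] //=; by rewrite expnS INR_mul IH. Qed.
Lemma INR_leq a b : (a <= b)%N -> INR a <= INR b.
Proof. by move/leP; apply: le_INR. Qed.

Definition lsum (s : seq nat) (F : nat -> R) := foldr Rplus 0 (map F s).

Lemma lsumD s F G : lsum s (fun i => F i + G i) = lsum s F + lsum s G.
Proof. rewrite /lsum; elim: s => [|x s IH] /=; lra. Qed.

Lemma lsumZ s c F : lsum s (fun i => c * F i) = c * lsum s F.
Proof. rewrite /lsum; elim: s => [|x s IH] /=; lra. Qed.

Lemma lsum_le s F G : (forall i, F i <= G i) -> lsum s F <= lsum s G.
Proof. move=> h; rewrite /lsum; elim: s => [|x s IH] /=; [lra | have := h x; lra]. Qed.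

Lemma lsum_ext s F G : (forall i, F i = G i) -> lsum s F = lsum s G.
Proof. move=> h; rewrite /lsum; elim: s => [|x s IH] /=; [lra | rewrite h IH; lra]. Qed.

Lemma INR_sum s (g : nat -> nat) : INR (\sum_(j <- s) g j)%N = lsum s (fun j => INR (g j)).
Proof. rewrite /lsum; elim: s => [|x s IH]; rewrite ?big_nil ?big_cons //=; by rewrite INR_add IH. Qed.

Lemma ln_prod s (r c : nat -> nat) : (forall j, (0 < r j)%N) ->
  ln (INR (\prod_(j <- s) r j ^ c j)%N) = lsum s (fun j => INR (c j) * ln (INR (r j))).
Proof.
move=> hr; elim: s => [|x s IH]; first by rewrite big_nil /= ln_1.
rewrite big_cons INR_mul ln_mult.
- by rewrite IH INR_exp ln_pow //; apply: lt_0_INR; apply/ltP.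
- rewrite INR_exp; apply: pow_lt; apply: lt_0_INR; apply/ltP; exact: hr.
apply: lt_0_INR; apply/ltP; rewrite prodn_gt0 // => j; by rewrite expn_gt0 hr.
Qed.

Lemma exp_prod s h : foldr Rmult 1 (map (fun i => exp (h i)) s) = exp (lsum s h).
Proof. elim: s => [|x s IH] /=; first by rewrite exp_0. by rewrite IH /lsum exp_plus. Qed.

Lemma iota1 K : iota 1 (S K - 1) = iota 1 K.
Proof. by rewrite subSS subn0. Qed.

Lemma INR_pred a : (0 < a)%N -> INR a.-1 = INR a - 1.
Proof. by case: a => // a _; rewrite S_INR /=; lra. Qed.

Lemma INR_gt0 a : (0 < a)%N -> 0 < INR a.
Proof. by move=> h; apply: lt_0_INR; apply/ltP. Qed.

Lemma ratio_prod (s : seq nat) : all (fun p => 0 < p)%N s ->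
  INR (\prod_(p <- s) p.-1)%N / INR (\prod_(p <- s) p)%N
  = foldr Rmult 1 (map (fun p => 1 - / INR p) s).
Proof.
elim: s => [|a s IH]; first by move=> _; rewrite !big_nil /=; field.
rewrite /= => /andP[a0 hs]; rewrite !big_cons !INR_mul -IH // INR_pred //.
have := INR_gt0 a0; have : 0 < INR (\prod_(p <- s) p)%N.
  apply: INR_gt0; rewrite big_seq; apply: prodn_cond_gt0 => p; exact: (allP hs).
move=> h1 h2; field; lra.
Qed.

Lemma phi_eq l : phi_l l = INR (TT l) / INR (QQ l).
Proof.
rewrite /phi_l /Rprod iota1 TT_eq /QQ ratio_prod.
  by rewrite /ps -map_comp.
apply/allP => p hp; apply: prime_gt0; exact: (allP (ps_prime l)).
Qed.

Lemma TT_le_QQ l : (TT l <= QQ l)%N.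
Proof. rewrite -GG_Q; exact: GG_le. Qed.

Lemma div_lb x q : (0 < q)%N -> INR (x %/ q)%N * INR q >= INR x - INR q.
Proof.
move=> q0; have e := divn_eq x q; have lt := ltn_pmod x q0.
have := INR_leq lt; rewrite S_INR.
have -> : INR x = INR (x %/ q * q + x %% q)%N by rewrite -e.
rewrite INR_add INR_mul; lra.
Qed.

Lemma div_ub x q : INR (x %/ q)%N * INR q <= INR x.
Proof. rewrite -INR_mul; apply: INR_leq; exact: leq_divM. Qed.

Lemma CC_lb l N j : (0 < j)%N ->
  INR (CC l N j) >= phi_l l * (INR N / (INR j * (INR j + 1))) - (1 + 2 * INR (TT l)).
Proof.
move=> j0.
set Q := INR (QQ l); set T := INR (TT l).
have Q0 : 0 < Q by apply: INR_gt0; exact: QQ_gt0.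
have TQ : T <= Q by apply: INR_leq; exact: TT_le_QQ.
have T0 : 0 <= T by apply: pos_INR.
set a := (N %/ j.+1)%N; set b := (N %/ j)%N.
have h1 := INR_leq (CC_nat l N j0); rewrite INR_add -/a -/b in h1.
have h2 := INR_leq (GG_lb l b.+1); have h3 := INR_leq (GG_ub l a.+1).
rewrite INR_mul in h2; rewrite INR_mul S_INR in h3.
have h4 := div_lb b.+1 (QQ_gt0 l); have h5 := div_ub a.+1 (QQ l).
rewrite -/Q S_INR in h4; rewrite -/Q S_INR in h5.
set X := INR (b.+1 %/ QQ l)%N in h2 h4; set Y := INR (a.+1 %/ QQ l)%N in h3 h5.
rewrite -/T in h2 h3.
have j0' : 0 < INR j by apply: INR_gt0.
have hb : INR b * INR j >= INR N - INR j.
  have := div_lb N j0; rewrite -/b; lra.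
have ha : INR a * (INR j + 1) <= INR N.
  have := div_ub N j.+1; rewrite -/a S_INR; lra.
rewrite phi_eq -/T -/Q.
have eX : T * X >= T / Q * (INR b + 1) - T.
  have : T * (X * Q) >= T * (INR b + 1 - Q) by apply: Rmult_ge_compat_l; lra.
  have -> : T / Q * (INR b + 1) - T = T * (INR b + 1 - Q) / Q by field; lra.
  move=> h; apply: Rle_ge; apply: (Rmult_le_reg_r Q) => //.
  have -> : T * (INR b + 1 - Q) / Q * Q = T * (INR b + 1 - Q) by field; lra.
  lra.
have eY : T * Y <= T / Q * (INR a + 1).
  have : T * (Y * Q) <= T * (INR a + 1) by apply: Rmult_le_compat_l; lra.
  move=> h; apply: (Rmult_le_reg_r Q) => //.
  have -> : T / Q * (INR a + 1) * Q = T * (INR a + 1) by field; lra.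
  lra.
have phi1 : 0 <= T / Q <= 1.
  split; first by apply: Rle_mult_inv_pos.
  apply: (Rmult_le_reg_r Q) => //; have -> : T / Q * Q = T by field; lra. lra.
have hba : INR b - INR a >= INR N / (INR j * (INR j + 1)) - 1.
  have -> : INR N / (INR j * (INR j + 1)) = INR N / INR j - INR N / (INR j + 1) by field; lra.
  have : INR b >= INR N / INR j - 1.
    apply: Rle_ge; apply: (Rmult_le_reg_r (INR j)) => //.
    have -> : (INR N / INR j - 1) * INR j = INR N - INR j by field; lra. lra.
  have : INR a <= INR N / (INR j + 1).
    apply: (Rmult_le_reg_r (INR j + 1)); first lra.
    have -> : INR N / (INR j + 1) * (INR j + 1) = INR N by field; lra. lra.
  lra.
have : T / Q * (INR b - INR a) >= T / Q * (INR N / (INR j * (INR j + 1)) - 1).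
  apply: Rmult_ge_compat_l; lra.
nra.
Qed.

Lemma r_pos l i : (0 < r_ l i)%N.
Proof.
have a0 : antichain l (set0 : {set 'I_i.+1}).
  rewrite /antichain; apply/andP; split; first exact: sub0set.
  by apply/primP => x y /mem_valP[k]; rewrite inE.
have h : (0 < #|[pred C : {set 'I_i.+1} | antichain l C]|)%N.
  by apply/card_gt0P; exists set0.
case: (@eq_bigmax_cond _ [pred C : {set 'I_i.+1} | antichain l C] (fun C => #|C|) h) => C hC e.
rewrite /r_ card_gt0; apply/set0Pn; exists C; rewrite inE.
have hC' : antichain l C by [].
by rewrite hC' /width /=; apply/eqP; rewrite -e.
Qed.


Lemma exp_le x y : x <= y -> exp x <= exp y.
Proof. case/Rle_lt_or_eq_dec => h; [apply/Rlt_le/exp_increasing/h | rewrite h; lra]. Qed.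

Lemma ln_le x y : 0 < x -> x <= y -> ln x <= ln y.
Proof. move=> x0; case/Rle_lt_or_eq_dec => h; [apply/Rlt_le/ln_increasing/h/x0 | rewrite h; lra]. Qed.

Lemma lsum_le_in s F G : (forall i, i \in s -> F i <= G i) -> lsum s F <= lsum s G.
Proof.
rewrite /lsum; elim: s => [|x s IH] h /=; first lra.
have := h x (mem_head _ _); have : foldr Rplus 0 [seq F i | i <- s] <= foldr Rplus 0 [seq G i | i <- s].
  by apply: IH => i hi; apply: h; rewrite inE hi orbT.
move=> h1 h2; exact: Rplus_le_compat.
Qed.

Lemma lsum_nonpos s F : (forall i, F i <= 0) -> lsum s F <= 0.
Proof. move=> h; rewrite /lsum; elim: s => [|x s IH] /=; [lra | have := h x; lra]. Qed.

Lemma ln2_pos : 0 < ln 2.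
Proof. rewrite -ln_1; apply: ln_increasing; lra. Qed.

Definition aa l i := 2 / (INR i * (INR i + 1)) * phi_l l.
Definition gg l i := ln (INR (r_ l i)) - INR (card_M l i) * ln 2.

Lemma INR2 : INR 2 = 2.
Proof. by rewrite /=; lra. Qed.

Lemma ln_f_bound l K n : (0 < l)%N ->
  ln (INR (f_prim n)) <=
  lsum (iota 1 K) (fun j => INR (CC l (n.*2) j) * gg l j) + INR (n.*2) * ln 2.
Proof.
move=> hl; have nm := nat_main n K hl.
rewrite (ord_to_iota _ _ (fun j => CC l n.*2 j * card_M l j)%N) (ord_to_iota _ _ (fun j => r_ l j ^ CC l n.*2 j)%N) in nm.
have := INR_leq nm; rewrite !INR_mul !INR_exp INR2.
set S := (\sum_(j <- iota 1 K) CC l n.*2 j * card_M l j)%N.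
set P := (\prod_(j <- iota 1 K) r_ l j ^ CC l n.*2 j)%N.
have f0 : 0 < INR (f_prim n) by apply: INR_gt0; exact: f_pos.
have P0 : 0 < INR P.
  apply: INR_gt0; rewrite /P; apply: prodn_gt0 => j; by rewrite expn_gt0 r_pos.
have p2 k : 0 < 2 ^ k by move=> *; apply: pow_lt; lra.
move=> h; have := ln_le (Rmult_lt_0_compat _ _ f0 (p2 S)) h.
rewrite !ln_mult // !ln_pow; try lra.
rewrite /P ln_prod; last by move=> j; exact: r_pos.
rewrite /S INR_sum.
have -> : lsum (iota 1 K) (fun j => INR (CC l n.*2 j) * gg l j) =
  lsum (iota 1 K) (fun j => INR (CC l n.*2 j) * ln (INR (r_ l j))) +
  (- ln 2) * lsum (iota 1 K) (fun j => INR (CC l n.*2 j * card_M l j)%N).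
  rewrite -lsumZ -lsumD; apply: lsum_ext => j; rewrite INR_mul /gg; ring.
lra.
Qed.

Lemma gg_nonpos l i : gg l i <= 0.
Proof.
rewrite /gg; have := INR_leq (r_le l i); rewrite INR_exp INR2 => h.
have := ln_le (INR_gt0 (r_pos l i)) h; rewrite ln_pow; lra.
Qed.

Lemma INR_double n : INR (n.*2) = 2 * INR n.
Proof. by rewrite -addnn INR_add; lra. Qed.

Lemma ln_f_bound2 l K n : (0 < l)%N ->
  ln (INR (f_prim n)) <=
  INR n * (lsum (iota 1 K) (fun j => aa l j * gg l j) + 2 * ln 2)
  - (1 + 2 * INR (TT l)) * lsum (iota 1 K) (gg l).
Proof.
move=> hl; apply: Rle_trans (ln_f_bound K n hl) _.
set E := 1 + 2 * INR (TT l).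
have -> : INR n * (lsum (iota 1 K) (fun j => aa l j * gg l j) + 2 * ln 2) - E * lsum (iota 1 K) (gg l)
  = lsum (iota 1 K) (fun j => (INR n * aa l j - E) * gg l j) + INR (n.*2) * ln 2.
  rewrite INR_double.
  have -> : lsum (iota 1 K) (fun j => (INR n * aa l j - E) * gg l j) =
     INR n * lsum (iota 1 K) (fun j => aa l j * gg l j) + (- E) * lsum (iota 1 K) (gg l).
    rewrite -!lsumZ -lsumD; apply: lsum_ext => j; ring.
  ring.
apply: Rplus_le_compat_r; apply: lsum_le_in => j; rewrite mem_iota => /andP[j1 _].
rewrite Rmult_comm [X in _ <= X]Rmult_comm; apply: Rmult_le_compat_neg_l; first exact: gg_nonpos.
have := CC_lb l (n.*2) j1; rewrite INR_double.
have -> : phi_l l * (2 * INR n / (INR j * (INR j + 1))) = INR n * aa l j.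
  rewrite /aa; field; have : 0 < INR j by apply: INR_gt0. lra.
rewrite /E; lra.
Qed.

Lemma target_eq l K : c_ l K * Rpower 2 (eta_ l K) =
  exp (lsum (iota 1 K) (fun j => aa l j * gg l j) + 2 * ln 2).
Proof.
have hc : c_ l K = exp (lsum (iota 1 K) (fun i => aa l i * ln (INR (r_ l i)))).
  rewrite /c_ /Rprod iota1 /Rpower; exact: exp_prod.
have he : eta_ l K = 2 - lsum (iota 1 K) (fun i => aa l i * INR (card_M l i)).
  by rewrite /eta_ /Rsum iota1.
rewrite hc /Rpower he -exp_plus; congr exp.
have -> : lsum (iota 1 K) (fun j => aa l j * gg l j) =
  lsum (iota 1 K) (fun i => aa l i * ln (INR (r_ l i))) +
  (- ln 2) * lsum (iota 1 K) (fun i => aa l i * INR (card_M l i)).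
  rewrite -lsumZ -lsumD; apply: lsum_ext => j; rewrite /gg; ring.
ring.
Qed.

Unset Implicit Arguments.
Theorem mainTheorem8 (l K : nat) (hl : (1 <= l)%nat) (hK : (1 <= K)%nat) :
  limsup_le (fun n : nat => Rpower (INR (f_prim n)) (1 / INR n))
            (c_ l K * Rpower 2 (eta_ l K)).
Proof.
rewrite target_eq.
set L := lsum (iota 1 K) (fun j => aa l j * gg l j) + 2 * ln 2.
set E := 1 + 2 * INR (TT l).
set D := - (E * lsum (iota 1 K) (gg l)).
have E0 : 0 < E by rewrite /E; have := pos_INR (TT l); lra.
have D0 : 0 <= D.
  rewrite /D; have := lsum_nonpos (iota 1 K) (gg_nonpos l); nra.
move=> eps he.
have eL : 0 < exp L by apply: exp_pos.
set d := ln (1 + eps / exp L).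
have d0 : 0 < d.
  rewrite /d -ln_1; apply: ln_increasing; first lra.
  have : 0 < eps / exp L by apply: Rdiv_lt_0_compat. lra.
have [N0 hN0] := INR_archimed d D (Rlt_gt _ _ d0).
exists (maxn N0 1) => n hn.
have n1 : (1 <= n)%N by apply: leq_trans hn; rewrite leq_max leqnn orbT.
have nN0 : (N0 <= n)%N by apply: leq_trans hn; rewrite leq_max leqnn.
have n0 : 0 < INR n by apply: INR_gt0.
have hb := ln_f_bound2 K n hl.
rewrite -/L -/E in hb.
have hb' : ln (INR (f_prim n)) <= INR n * L + D by rewrite /D; lra.
rewrite /Rpower.
have step1 : 1 / INR n * ln (INR (f_prim n)) <= L + D / INR n.
  apply: (Rmult_le_reg_l (INR n)) => //.
  have -> : INR n * (1 / INR n * ln (INR (f_prim n))) = ln (INR (f_prim n)) by field; lra.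
  have -> : INR n * (L + D / INR n) = INR n * L + D by field; lra.
  exact: hb'.
have step2 : D / INR n <= d.
  apply: (Rmult_le_reg_r (INR n)) => //.
  have -> : D / INR n * INR n = D by field; lra.
  have := INR_leq nN0; nra.
apply: Rle_trans (exp_le step1) _.
rewrite exp_plus.
have : exp (D / INR n) <= exp d by apply: exp_le.
have pe0 : 0 < eps / exp L by apply: Rdiv_lt_0_compat.
have pe : 0 < 1 + eps / exp L by lra.
rewrite /d exp_ln //.
move=> h.
have : exp L * exp (D / INR n) <= exp L * (1 + eps / exp L) by apply: Rmult_le_compat_l; lra.
have -> : exp L * (1 + eps / exp L) = exp L + eps by field; lra.
done.
Qed.
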